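(* Fix $\epsilon\in(0,1/5)$ and an integer $d\geq3$. There is a constant $C=C(d,\epsilon)>0$ such that for every natural number $n\geq1$ and every $t\in\mathbb{N}\cap[1,2\epsilon\log_d n]$, $$\mathcal{G}_{n,d}\big(\{G\in\mathbb{G}_{n,d}: |\mathfrak{C}_t(G)|\geq n^{1-2\epsilon}\}\big)\leq C\,n^{5\epsilon-1}.$$
   Context: Graphs are undirected with no loops or parallel edges. $\mathbb{G}_{n,d}$ is the finite set of $d$-regular graphs on vertex set $\{1,\dots,n\}$ and $\mathcal{G}_{n,d}$ the uniform probability measure on it (the statement concerns those $n$ for which $\mathbb{G}_{n,d}$ is nonempty). A cycle in $G$ is a set $C=\{x_1,\dots,x_k\}$ of distinct vertices such that $\{x_1,x_2\},\dots,\{x_{k-1},x_k\},\{x_k,x_1\}$ are edges; $\mathfrak{C}_t(G)$ is the set of cycles $C$ with $|C|<t$. *)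

(* Defs.v *)
From HB Require Import structures.
From mathcomp Require Import all_boot all_order all_algebra.
From mathcomp Require Import all_classical all_reals all_analysis.
Set Implicit Arguments. Unset Strict Implicit. Unset Printing Implicit Defensive.
Import Order.TTheory GRing.Theory Num.Theory.

(* Vertex set {1,...,n} is represented by 'I_n = {0,...,n-1}.
   A graph is its edge set: a set of 2-element subsets of 'I_n
   (undirected, no loops, no parallel edges). *)
Definition graph (n : nat) := {set {set 'I_n}}.

Definition simple_graph n (E : graph n) : bool :=
  [forall e in E, #|e| == 2].

Definition deg n (E : graph n) (v : 'I_n) : nat := #|[set e in E | v \in e]|.

Definition regular n (d : nat) (E : graph n) : bool :=
  [forall v, deg E v == d].

Definition regular_graphs (n d : nat) : {set graph n} :=
  [set E : graph n | simple_graph E && regular d E].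

Definition adj n (E : graph n) : rel 'I_n := fun x y => [set x; y] \in E.

Definition is_cycle n (E : graph n) (C : {set 'I_n}) : Prop :=
  exists s : seq 'I_n,
    [/\ uniq s, 3 <= size s, [set x in s] = C & cycle (adj E) s].

Definition short_cycles n (E : graph n) (t : nat) : {set {set 'I_n}} :=
  [set C : {set 'I_n} | `[< is_cycle E C >] && (#|C| < t)].

(* Main.v *)
Require Import Defs.
From HB Require Import structures.
From mathcomp Require Import all_boot all_order all_algebra.
From mathcomp Require Import all_classical all_reals all_analysis.
Import Order.TTheory GRing.Theory Num.Theory.
From mathcomp Require Import ring lra zify.

Module CombLib.
From mathcomp Require Import ssrbool eqtype ssrnat seq path fintype finfun finset bigop tuple.
Set Implicit Arguments. Unset Strict Implicit. Unset Printing Implicit Defensive.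

Lemma sum_b_card (T : finType) (P : pred T) :
  \sum_(x : T) (P x : nat) = #|[set x | P x]|.
Proof.
by rewrite -sum1_card [RHS]big_mkcond; apply: eq_bigr => x _; rewrite inE; case: (P x).
Qed.

Lemma deg_sum n (E : graph n) w : deg E w = \sum_(f in E) (w \in f : nat).
Proof.
rewrite /deg -sum1_card big_mkcond [RHS]big_mkcond /=.
by apply: eq_bigr => f _; rewrite inE; case: (f \in E); case: (w \in f).
Qed.

Lemma set2_inj_r (T : finType) (u x y : T) : [set u; x] = [set u; y] -> x = y.
Proof.
move=> h; have : x \in [set u; y] by rewrite -h !inE eqxx orbT.
rewrite !inE => /orP [/eqP xu|/eqP //]; subst x.
have : y \in [set u; u] by rewrite h !inE eqxx orbT.
by rewrite !inE orbb => /eqP.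
Qed.

Lemma simpleP n (E : graph n) f : simple_graph E -> f \in E -> #|f| = 2.
Proof. by move/forall_inP => h /h /eqP. Qed.

Lemma nbr_sum n (E : graph n) u :
  simple_graph E -> \sum_x ([set u; x] \in E : nat) = deg E u.
Proof.
move=> sE; rewrite (sum_b_card (fun x => [set u; x] \in E)) /deg.
have -> : [set f in E | u \in f] = (fun x => [set u; x]) @: [set x | [set u; x] \in E].
  apply/setP => f; rewrite inE; apply/andP/imsetP.
  - case=> fE uf; have /eqP/cards2P [a [b [ab fab]]] := simpleP sE fE.
    move: uf; rewrite fab !inE => /orP [/eqP ua | /eqP ub].
    + by exists b; rewrite ?inE ua -?fab.
    + by exists a; rewrite ?inE ub setUC -?fab.
  - by case=> x; rewrite inE => Ex ->; rewrite !inE eqxx.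
by rewrite card_in_imset // => x y _ _ /set2_inj_r.
Qed.

Lemma sum_mem_card (T : finType) (f : {set T}) : \sum_x (x \in f : nat) = #|f|.
Proof.
by rewrite -sum1_card [RHS]big_mkcond; apply: eq_bigr => x _; case: (x \in f).
Qed.

Lemma handshake n (E : graph n) : simple_graph E -> \sum_x deg E x = 2 * #|E|.
Proof.
move=> sE; under eq_bigr do rewrite deg_sum.
rewrite exchange_big /= mulnC -sum_nat_const; apply: eq_bigr => f fE.
by rewrite sum_mem_card (simpleP sE fE).
Qed.

Lemma regular_sum n d (E : graph n) : regular d E -> \sum_x deg E x = n * d.
Proof.
move/forallP => rE; under eq_bigr do rewrite (eqP (rE _)).
by rewrite sum_nat_const card_ord.
Qed.

Section Switch.
Variables (n d : nat).
Definition AH (H : graph n) := [set E in regular_graphs n d | H \subset E].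

Lemma AHPg (K : graph n) E : E \in AH K -> [/\ simple_graph E, regular d E & K \subset E].
Proof. by rewrite !inE => /andP [/andP [-> ->] ->]. Qed.

Variables (H : graph n) (u v : 'I_n).
Local Notation AHP := (@AHPg H).
Hypothesis uv : u != v.
Hypothesis uvH : [set u; v] \in H.

Definition good (E : graph n) x y :=
  [&& [set x; y] \in E, x != u, x != v, y != u, y != v,
      [set u; x] \notin E, [set v; y] \notin E & [set x; y] \notin H].

Definition sw (E : graph n) x y : graph n :=
  [set u; x] |: ([set v; y] |: ((E :\ [set u; v]) :\ [set x; y])).


Lemma key_arith (w a b c e : 'I_n) : a != b -> a != c -> a != e -> b != c -> b != e -> c != e ->
  ((w \in [set a; c]) + (w \in [set b; e]) =
   (w \in [set a; b]) + (w \in [set c; e]))%N.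
Proof.
move=> ab ac ae bc be ce; rewrite !inE.
have ba : b != a by rewrite eq_sym.
have ca : c != a by rewrite eq_sym.
have ea : e != a by rewrite eq_sym.
have cb : c != b by rewrite eq_sym.
have eb : e != b by rewrite eq_sym.
have ec : e != c by rewrite eq_sym.
case: (eqVneq w a) => [->|wa]; first by rewrite ?eqxx /= ?(negbTE ab, negbTE ac, negbTE ae).
case: (eqVneq w b) => [->|wb]; first by rewrite ?eqxx /= ?(negbTE ba, negbTE bc, negbTE be).
case: (eqVneq w c) => [->|wc]; first by rewrite ?eqxx /= ?(negbTE ca, negbTE cb, negbTE ce).
by case: (eqVneq w e).
Qed.

Lemma sw_in E x y : E \in AH H -> good E x y -> sw E x y \in AH (H :\ [set u; v]).
Proof.
case/AHP => sE rE HE /and4P [xyE xu xv /and5P [yu yv uxE vyE xyH]].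
have uvE : [set u; v] \in E by apply: (subsetP HE).
have xy : x != y.
  by have := simpleP sE xyE; rewrite cards2; case: (x != y).
have uxvy : [set u; x] != [set v; y].
  apply/eqP => h; have : u \in [set v; y] by rewrite -h !inE eqxx.
  by rewrite !inE (negbTE uv) eq_sym (negbTE yu).
rewrite !inE; apply/andP; split; first (apply/andP; split).
- apply/forall_inP => f; rewrite !inE => /orP [/eqP ->|/orP [/eqP ->|/andP [_ /andP [_ fE]]]].
  + by rewrite cards2 [u == _]eq_sym xu.
  + by rewrite cards2 [v == _]eq_sym yv.
  + by rewrite (simpleP sE fE).
- apply/forallP => w; have /forallP/(_ w)/eqP := rE.
  rewrite !deg_sum (big_setD1 _ uvE) (big_setD1 [set x; y]) /=; last first.
    rewrite !inE xyE andbT; apply/negP => /eqP h; move: xyH; rewrite h.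
    by rewrite uvH.
  rewrite big_setU1 /=; last first.
    by rewrite !inE negb_or uxvy /= negb_and negb_and uxE !orbT.
  rewrite big_setU1 /=; last by rewrite !inE (negbTE vyE) !andbF.
  move=> <-; rewrite !addnA (@key_arith w u v x y) //; by rewrite eq_sym.
- apply/subsetP => f; rewrite !inE => /andP [fuv fH].
  have fE : f \in E by apply: (subsetP HE).
  rewrite fuv fE /= andbT; apply/orP; right; apply/orP; right.
  by apply/eqP => h; move: xyH; rewrite -h fH.
Qed.

Lemma sw_inv E x y : E \in AH H -> good E x y ->
  E = [set u; v] |: ([set x; y] |: ((sw E x y :\ [set u; x]) :\ [set v; y])).
Proof.
case/AHP => sE rE HE /and4P [xyE xu xv /and5P [yu yv uxE vyE xyH]].
have uvE : [set u; v] \in E by apply: (subsetP HE).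
apply/setP => f; rewrite !inE.
case: (eqVneq f [set u; v]) => [->|fuv] /=; first by rewrite uvE.
case: (eqVneq f [set x; y]) => [->|fxy] /=; first by rewrite xyE.
case: (eqVneq f [set v; y]) => [->|fvy] /=; first by rewrite (negbTE vyE).
case: (eqVneq f [set u; x]) => [->|fux] /=; first by rewrite (negbTE uxE).
by [].
Qed.

Lemma reg_deg (E : graph n) (w : 'I_n) : regular d E -> deg E w = d.
Proof. by move/forallP/(_ w)/eqP. Qed.

Lemma T1 (E : graph n) (z : 'I_n) : simple_graph E -> regular d E ->
  \sum_x \sum_y ((x == z) * ([set x; y] \in E)) = d.
Proof.
move=> sE rE; under eq_bigr do rewrite -big_distrr /= nbr_sum // reg_deg //.
by rewrite (bigD1 z) //= eqxx mul1n big1 ?addn0 // => x /negbTE ->.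
Qed.

Lemma T2 (E : graph n) (z : 'I_n) : simple_graph E -> regular d E ->
  \sum_x \sum_y ((y == z) * ([set x; y] \in E)) = d.
Proof.
move=> sE rE.
have h x : \sum_y ((y == z) * ([set x; y] \in E)) = ([set z; x] \in E).
  rewrite (bigD1 z) //= eqxx mul1n big1 ?addn0; first by rewrite setUC.
  by move=> y /negbTE ->.
under eq_bigr do rewrite h.
by rewrite nbr_sum // reg_deg.
Qed.

Lemma T3 (E : graph n) (z : 'I_n) : simple_graph E -> regular d E ->
  \sum_x \sum_y (([set z; x] \in E) * ([set x; y] \in E)) = d * d.
Proof.
move=> sE rE; under eq_bigr do rewrite -big_distrr /= nbr_sum // reg_deg //.
by rewrite -big_distrl /= nbr_sum // reg_deg.
Qed.

Lemma T4 (E : graph n) (z : 'I_n) : simple_graph E -> regular d E ->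
  \sum_x \sum_y (([set z; y] \in E) * ([set x; y] \in E)) = d * d.
Proof.
move=> sE rE; rewrite exchange_big /=.
have h y : \sum_x ([set x; y] \in E : nat) = d.
  by under eq_bigr do rewrite setUC; rewrite nbr_sum // reg_deg.
under eq_bigr do rewrite -big_distrr /= h.
by rewrite -big_distrl /= nbr_sum // reg_deg.
Qed.

Lemma T5 (F : graph n) : simple_graph F ->
  \sum_x \sum_y ([set x; y] \in F : nat) = 2 * #|F|.
Proof.
move=> sF; under eq_bigr do rewrite nbr_sum //.
by rewrite handshake.
Qed.

Lemma bool8 (a b1 b2 b3 b4 b5 b6 b7 : bool) :
  (a : nat) <= [&& a, ~~ b1, ~~ b2, ~~ b3, ~~ b4, ~~ b5, ~~ b6 & ~~ b7] + b1 * a + b2 * a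
     + b3 * a + b4 * a + b5 * a + b6 * a + b7.
Proof.
by case: a; case: b1; case: b2; case: b3; case: b4; case: b5; case: b6; case: b7.
Qed.

Definition cst := 4 * d + 2 * (d * d) + 2 * #|H|.

Lemma count_low E : E \in AH H ->
  n * d <= \sum_x \sum_y good E x y + cst.
Proof.
move=> EA; have [sE rE HE] := AHP EA.
have sH : simple_graph H.
  by apply/forall_inP => f fH; rewrite (simpleP sE) // (subsetP HE).
have pw x y : ([set x; y] \in E : nat) <=
   good E x y + ((x == u) * ([set x; y] \in E)) + ((x == v) * ([set x; y] \in E))
   + ((y == u) * ([set x; y] \in E)) + ((y == v) * ([set x; y] \in E))
   + (([set u; x] \in E) * ([set x; y] \in E)) + (([set v; y] \in E) * ([set x; y] \in E))
   + ([set x; y] \in H).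
  exact: bool8.
have : \sum_x \sum_y ([set x; y] \in E : nat) <= \sum_x \sum_y (good E x y + ((x == u) * ([set x; y] \in E)) + ((x == v) * ([set x; y] \in E))
   + ((y == u) * ([set x; y] \in E)) + ((y == v) * ([set x; y] \in E))
   + (([set u; x] \in E) * ([set x; y] \in E)) + (([set v; y] \in E) * ([set x; y] \in E))
   + ([set x; y] \in H)).
  by apply: leq_sum => x _; apply: leq_sum => y _; apply: pw.
under [X in X <= _ -> _]eq_bigr do rewrite nbr_sum // reg_deg //.
rewrite sum_nat_const card_ord.
under [X in _ <= X -> _]eq_bigr do rewrite !big_split /=.
rewrite !big_split /= T1 // T1 // T2 // T2 // T3 // T4 // T5 // /cst.
by lia.
Qed.

Lemma sum_eq1 (T : finType) (A : {pred T}) (z : T) : \sum_(E in A) (E == z : nat) <= 1.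
Proof.
rewrite big_mkcond /= (bigD1 z) //= eqxx big1 ?addn0; first by case: (z \in A).
by move=> E /negbTE ->; case: (E \in A).
Qed.

Lemma count_up :
  \sum_(E in AH H) \sum_x \sum_y (good E x y : nat) <= #|AH (H :\ [set u; v])| * (d * d).
Proof.
set F := H :\ [set u; v].
have step1 E : E \in AH H -> \sum_x \sum_y (good E x y : nat) =
    \sum_(E' in AH F) \sum_x \sum_y ((good E x y && (sw E x y == E')) : nat).
  move=> EA; rewrite [RHS]exchange_big; apply: eq_bigr => x _.
  rewrite [RHS]exchange_big; apply: eq_bigr => y _.
  case g: (good E x y) => /=; last by rewrite big1.
  rewrite (bigD1 (sw E x y)) /=; last exact: sw_in.
  rewrite eqxx big1 // => E' /andP [_ ne].
  by rewrite eq_sym (negbTE ne).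
rewrite (eq_bigr _ step1) exchange_big /= -sum_nat_const.
apply: leq_sum => E' E'A; have [sE' rE' _] := AHPg E'A.
rewrite exchange_big /=.
have -> : d * d = \sum_x \sum_y (([set u; x] \in E') * ([set v; y] \in E')).
  under eq_bigr do rewrite -big_distrr /= nbr_sum // reg_deg //.
  by rewrite -big_distrl /= nbr_sum // reg_deg.
apply: leq_sum => x _; rewrite exchange_big /=; apply: leq_sum => y _.
rewrite mulnb; case h: (([set u; x] \in E') && ([set v; y] \in E')) => /=.
  apply: leq_trans (sum_eq1 (AH H)
     ([set u; v] |: ([set x; y] |: ((E' :\ [set u; x]) :\ [set v; y])))).
  apply: leq_sum => E EA; case g: (good E x y) => //=.
  case s: (sw E x y == E') => //=.
  by rewrite {1}(sw_inv EA g) (eqP s) eqxx.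
rewrite big1 // => E EA; case g: (good E x y) => //=.
case s: (sw E x y == E') => //=.
by move: h; rewrite -(eqP s) !inE !eqxx /= orbT.
Qed.

Lemma switch_ineq :
  #|AH H| * (n * d) <= #|AH (H :\ [set u; v])| * (d * d) + #|AH H| * cst.
Proof.
rewrite -!sum_nat_const.
apply: leq_trans (_ : \sum_(E in AH H) (\sum_x \sum_y (good E x y : nat) + cst) <= _).
  by apply: leq_sum => E EA; apply: count_low.
by rewrite big_split /= leq_add2r sum_nat_const; exact: count_up.
Qed.
End Switch.

Lemma leq_expl m p e : m <= p -> m ^ e <= p ^ e.
Proof. by move=> h; elim: e => // e IH; rewrite !expnS leq_mul. Qed.

Lemma AH_sub n d (K : graph n) : #|AH d K| <= #|regular_graphs n d|.
Proof. by apply: subset_leq_card; apply/subsetP => E; rewrite inE => /andP []. Qed.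

Lemma iterate n d K : forall m (H : graph n), #|H| = m -> m <= K ->
  #|AH d H| * (n * d - (4 * d + 2 * (d * d) + 2 * K)) ^ m
     <= #|regular_graphs n d| * (d * d) ^ m.
Proof.
set cK := 4 * d + 2 * (d * d) + 2 * K.
elim=> [|m IH] H cH mK.
  by rewrite !expn0 !muln1 AH_sub.
have [AH0|/set0Pn [E EA]] := eqVneq (AH d H) set0.
  by rewrite AH0 cards0.
have [e eH] : exists e, e \in H.
  by apply/set0Pn; rewrite -card_gt0 cH.
have [sE _ HE] := AHPg EA.
have /eqP/cards2P [u [v [uv euv]]] := simpleP sE (subsetP HE e eH).
subst e.
have sw := @switch_ineq n d H u v uv eH.
have cHe : #|H :\ [set u; v]| = m by move: cH; rewrite (cardsD1 [set u; v]) eH add1n => -[].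
have IHe := IH _ cHe (ltnW mK).
set a := #|AH d H| in sw *; set b := #|AH d (H :\ [set u; v])| in sw IHe *.
set q := n * d - cK in IHe *.
have cstK : cst d H <= cK by rewrite /cst /cK cH leq_add2l leq_mul2l mK orbT.
have h1 : a * q <= b * (d * d).
  rewrite /q mulnBr leq_subLR; apply: (leq_trans sw).
  by rewrite addnC leq_add2r leq_mul2l cstK orbT.
rewrite expnS mulnA; apply: (leq_trans (leq_mul h1 (leqnn _))).
have -> : b * (d * d) * q ^ m = (d * d) * (b * q ^ m) by rewrite mulnAC mulnC.
by rewrite expnS [X in _ <= X]mulnCA leq_mul2l IHe orbT.
Qed.

Fixpoint pedges n (x : 'I_n) (p : seq 'I_n) : graph n :=
  if p is y :: p' then [set x; y] |: pedges y p' else set0.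

Definition cedges n (s : seq 'I_n) : graph n :=
  if s is x :: p then [set last x p; x] |: pedges x p else set0.

Lemma path_sub n (E : graph n) x p : path (adj E) x p -> pedges x p \subset E.
Proof.
elim: p x => [|y p IH] x /=; first by rewrite sub0set.
by case/andP => exy /IH sub; rewrite subUset sub1set sub andbT; exact: exy.
Qed.

Lemma cycle_sub n (E : graph n) s : cycle (adj E) s -> cedges s \subset E.
Proof.
case: s => [|x p] /=; first by rewrite sub0set.
rewrite rcons_path => /andP [/path_sub sub e].
by rewrite subUset sub1set sub andbT; exact: e.
Qed.

Lemma pedges_vert n (x : 'I_n) p f w : f \in pedges x p -> w \in f -> w \in x :: p.
Proof.
elim: p x f => [|y p IH] x f /=; first by rewrite inE.
rewrite in_setU1 => /orP [/eqP -> | /IH h wf].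
  by rewrite !inE => /orP [->|->]; rewrite ?orbT.
by move: (h wf); rewrite !inE => ->; rewrite orbT.
Qed.

Lemma card_pedges n (x : 'I_n) p : uniq (x :: p) -> #|pedges x p| = size p.
Proof.
elim: p x => [|y p IH] x /=; first by rewrite cards0.
case/andP => xyp /andP [yp up].
rewrite cardsU1 IH /=; last by rewrite yp.
suff -> : [set x; y] \notin pedges y p by [].
apply/negP => /(@pedges_vert _ _ _ _ x); rewrite !inE eqxx => /(_ isT).
by move: xyp; rewrite inE => /negP.
Qed.

Lemma card_cedges n (s : seq 'I_n) : uniq s -> 3 <= size s -> #|cedges s| = size s.
Proof.
case: s => [|x [|y [|z r]]] //= us _.
rewrite cardsU1.
have -> : #|[set x; y] |: ([set y; z] |: pedges z r)| = (size r).+2 by apply: (card_pedges us).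
suff -> : [set last z r; x] \notin [set x; y] |: pedges y (z :: r) by [].
move: us => /= /andP [xn /andP [yn _]].
rewrite in_setU1 negb_or; apply/andP; split.
  rewrite setUC; apply/negP => /eqP /set2_inj_r lz.
  by move: yn; rewrite -lz mem_last.
apply/negP => fp.
have xin : x \in [set last z r; x] by rewrite !inE eqxx orbT.
by have := @pedges_vert n y (z :: r) _ x fp xin; apply/negP.
Qed.

Lemma sc_bound n (E : graph n) t :
  #|short_cycles E t| <=
  \sum_(k < t) #|[set s : k.-tuple 'I_n | uniq s && (3 <= k) && cycle (adj E) s]|.
Proof.
rewrite -sum1_card.
have h C : C \in short_cycles E t -> 1 = \sum_(k < t) (#|C| == k : nat).
  rewrite inE => /andP [_ ct]; rewrite (bigD1 (Ordinal ct)) //= eqxx big1 // => k kne.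
  case: eqP => // ck; move: kne; suff -> : k = Ordinal ct by rewrite eqxx.
  by apply: val_inj; rewrite /= ck.
rewrite (eq_bigr _ h) exchange_big /=; apply: leq_sum => k _.
rewrite big_mkcond /=.
have -> : \sum_C (if C \in short_cycles E t then (#|C| == k : nat) else 0) =
          \sum_C (((C \in short_cycles E t) && (#|C| == k)) : nat).
  by apply: eq_bigr => C _; case: (C \in short_cycles E t).
rewrite (sum_b_card (fun C => (C \in short_cycles E t) && (#|C| == k))).
apply: leq_trans (leq_imset_card (fun s : k.-tuple 'I_n => [set x in s]) _).
apply: subset_leq_card; apply/subsetP => C; rewrite inE => /andP [CS /eqP ck].
move: CS; rewrite inE => /andP [/asboolP [s [us s3 sC cyc]] _].
have sz : size s == k by rewrite -ck -sC cardsE (card_uniqP us).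
apply/imsetP; exists (Tuple sz); last by rewrite -sC.
by rewrite inE /= us cyc -(eqP sz) s3.
Qed.

Lemma geom a t : 1 < a -> \sum_(k < t) a ^ k <= a ^ t.
Proof.
move=> a1; elim: t => [|t IH]; first by rewrite big_ord0.
rewrite big_ord_recr /= expnS.
apply: leq_trans (_ : a ^ t + a ^ t <= _); first by rewrite leq_add2r.
by rewrite addnn -mul2n leq_mul2r a1 orbT.
Qed.

Lemma key_ineq n d cK : (d + 1) * cK <= n * d -> n * (d * d) <= (d + 1) * (n * d - cK).
Proof. move=> h; rewrite mulnBr; nia. Qed.

Lemma per_s n d t k (s : k.-tuple 'I_n) : 0 < n -> 0 < d -> k < t ->
  (d + 1) * (4 * d + 2 * (d * d) + 2 * t) <= n * d ->
  n ^ k * \sum_(E in regular_graphs n d) ((uniq s && (3 <= k) && cycle (adj E) s) : nat)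
    <= #|regular_graphs n d| * (d + 1) ^ k.
Proof.
move=> n0 d0 kt hyp.
case h: (uniq s && (3 <= k)); last by rewrite big1 ?muln0 // => E _; rewrite h.
move/andP: h => [us k3].
have sk : size s = k by rewrite size_tuple.
apply: leq_trans (_ : n ^ k * #|AH d (cedges s)| <= _).
  rewrite leq_mul2l; apply/orP; right.
  rewrite -sum1_card big_mkcond [X in _ <= X]big_mkcond /=; apply: leq_sum => E _.
  case RG: (E \in regular_graphs n d) => //=.
  case cyc: (cycle (adj E) s) => //.
  by rewrite /AH in_set RG (cycle_sub cyc).
set cK := 4 * d + 2 * (d * d) + 2 * t.
have it := @iterate n d t k (cedges s).
rewrite card_cedges ?sk // in it; have {it} := it erefl (ltnW kt).
rewrite -/cK; set q := n * d - cK => it.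
have key := key_ineq hyp; rewrite -/q in key.
have qpos : 0 < q.
  rewrite /q subn_gt0; apply: leq_trans hyp.
  by rewrite -[X in X < _]mul1n ltn_mul2r addn1 ltnS d0 /cK; lia.
rewrite -(@leq_pmul2r (q ^ k)) ?expn_gt0 ?qpos //.
apply: leq_trans (_ : #|regular_graphs n d| * (d * d) ^ k * n ^ k <= _).
  by rewrite -mulnA mulnC leq_mul2r it orbT.
rewrite -!mulnA -!expnMn leq_mul2l; apply/orP; right.
by apply: leq_expl; rewrite mulnC.
Qed.

Lemma total n d t : 0 < n -> 0 < d ->
  (d + 1) * (4 * d + 2 * (d * d) + 2 * t) <= n * d ->
  \sum_(E in regular_graphs n d) #|short_cycles E t| <= #|regular_graphs n d| * (d + 1) ^ t.
Proof.
move=> n0 d0 hyp.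
apply: (@leq_trans (\sum_(E in regular_graphs n d) \sum_(k < t) #|[set s : k.-tuple 'I_n | uniq s && (3 <= k) && cycle (adj E) s]|)); first by apply: leq_sum => E _; apply: sc_bound.
rewrite exchange_big /=.
apply: leq_trans (_ : \sum_(k < t) #|regular_graphs n d| * (d + 1) ^ k <= _); last first.
  by rewrite -big_distrr leq_mul2l geom ?orbT // addn1 ltnS.
apply: leq_sum => k _.
under eq_bigr do rewrite -sum_b_card.
rewrite exchange_big /=.
rewrite -(@leq_pmul2l (n ^ k)) ?expn_gt0 ?n0 // big_distrr /=.
have -> : n ^ k * (#|regular_graphs n d| * (d + 1) ^ k) =
  \sum_(s : k.-tuple 'I_n) (#|regular_graphs n d| * (d + 1) ^ k).
  by rewrite sum_nat_const card_tuple card_ord.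
apply: leq_sum => s _; exact: per_s.
Qed.

End CombLib.
Import CombLib.

Local Open Scope ring_scope.

Lemma ln_ge_sub (R : realType) (x : R) : 0 < x -> 1 - x^-1 <= ln x.
Proof.
move=> x0.
have h := @le_ln1Dx R (x^-1 - 1).
have xi : 0 < x^-1 by rewrite invr_gt0.
have : ln (1 + (x^-1 - 1)) <= x^-1 - 1 by apply: h; lra.
rewrite addrC subrK lnV ?posrE //; lra.
Qed.

Lemma ln_le_sub (R : realType) (x : R) : 0 < x -> ln x <= x - 1.
Proof.
move=> x0; have h := @le_ln1Dx R (x - 1).
have e : 1 + (x - 1) = x by ring.
rewrite e in h; apply: h; lra.
Qed.

Lemma ln_small (R : realType) (n : nat) : (256 <= n)%N ->
  8 * ln (n%:R : R) <= n%:R.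
Proof.
move=> n256.
have n0 : (0 : R) < n%:R by rewrite ltr0n; apply: leq_trans n256.
set s := (n%:R : R) `^ (2^-1).
have s0 : 0 < s by rewrite /s powR_gt0.
have ss : s * s = n%:R.
  rewrite /s -powRD; last by apply/implyP => _; exact: lt0r_neq0.
  have -> : (2^-1 + 2^-1 : R) = 1 by field.
  by rewrite powRr1 // ltW.
have lns : ln (n%:R : R) = 2 * ln s by rewrite /s ln_powR mulrA mulfV // mul1r.
have ls := @ln_le_sub R s s0.
have : (256 : R) <= n%:R by rewrite (ler_nat R 256 n).
rewrite lns -ss; nra.
Qed.

Lemma hyp_lem n d t : (3 <= d)%N -> (8 * t <= n)%N -> (4 * (d + 1) * (d + 2) + 256 <= n)%N ->
  ((d + 1) * (4 * d + 2 * (d * d) + 2 * t) <= n * d)%N.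
Proof.
move=> d3 t8 large.
have h1 := leq_mul large (leqnn d).
have h2 := leq_mul t8 (leqnn d).
have h3 : (t <= t * d)%N by rewrite leq_pmulr //; apply: leq_trans d3.
lia.
Qed.

Lemma sq_cube d : (3 <= d)%N -> ((d + 1) ^ 2 <= d ^ 3)%N.
Proof.
move=> d3.
have h1 : (3 * (d*d) <= d * (d*d))%N by rewrite leq_mul2r d3 orbT.
have h2 : (3 * d <= d * d)%N by rewrite leq_mul2r d3 orbT.
rewrite !expnS expn0 !muln1.
lia.
Qed.

Theorem lemma4p1 (R : realType) (eps : R) (d : nat) :
  0 < eps -> eps < 1 / 5 -> (3 <= d)%N ->
  exists C : R, 0 < C /\
    forall n t : nat, (1 <= n)%N -> (0 < #|regular_graphs n d|)%N ->
      (1 <= t)%N -> (t%:R <= 2 * eps * (ln (n%:R : R) / ln (d%:R : R))) ->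
      (#|[set E in regular_graphs n d |
            (n%:R : R) `^ (1 - 2 * eps) <= (#|short_cycles E t|)%:R]|%:R
         / (#|regular_graphs n d|)%:R : R)
      <= C * (n%:R : R) `^ (5 * eps - 1).
Proof.
move=> e0 e5 d3.
pose n0 : nat := (4 * (d + 1) * (d + 2) + 256)%N.
exists n0%:R; split; first by rewrite ltr0n /n0 addn_gt0 orbT.
move=> n t n1 N0 t1 ht.
set N := #|regular_graphs n d|.
set p := (n%:R : R) `^ (1 - 2 * eps).
set Bad := [set E in regular_graphs n d | p <= (#|short_cycles E t|)%:R].
have NR : (0:R) < N%:R by rewrite ltr0n.
have n0R : (0:R) < n%:R by rewrite ltr0n.
have BadN : (#|Bad| <= N)%N.
  by apply: subset_leq_card; apply/fintype.subsetP => E; rewrite inE => /andP [].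
have ratio1 : #|Bad|%:R / N%:R <= (1:R) by rewrite ler_pdivrMr // mul1r ler_nat.
have C1 : (1 : R) <= n0%:R by rewrite ler1n /n0 addn_gt0 orbT.
case: (ltnP n n0) => [small|large].
  apply: (le_trans ratio1).
  have h1 : (n%:R : R) `^ (-1) <= n%:R `^ (5 * eps - 1).
    by apply: ler_powR; [rewrite ler1n | lra].
  rewrite powR_inv1 ?ler0n // in h1.
  apply: (le_trans _ (ler_wpM2l (ler0n _ _) h1)).
  by rewrite ler_pdivlMr // mul1r ler_nat ltnW.
have d0 : (0 < d)%N by apply: leq_trans d3.
have dR : (3 : R) <= d%:R by rewrite (ler_nat R 3 d).
have lnd : (2/3 : R) <= ln d%:R.
  have dpos : (0 : R) < d%:R by lra.
  have := @ln_ge_sub R d%:R dpos.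
  have : d%:R^-1 * d%:R = 1 :> R by rewrite mulVf ?gt_eqF.
  have : (0:R) < d%:R^-1 by rewrite invr_gt0.
  nra.
set L := ln (d%:R : R) in lnd ht *.
have lnn0 : 0 <= ln (n%:R : R) by apply: ln_ge0; rewrite ler1n.
set q := ln (n%:R : R) / L in ht.
have q0 : 0 <= q by rewrite /q divr_ge0 //; lra.
have qL : q * L = ln (n%:R : R) by rewrite /q mulfVK // gt_eqF //; lra.
have tln : t%:R <= ln (n%:R : R).
  rewrite -qL; apply: (le_trans ht).
  rewrite [q * L]mulrC; apply: ler_wpM2r => //; lra.
have t8 : (8 * t <= n)%N.
  rewrite -(ler_nat R) natrM.
  have h : (256 <= n)%N by apply: leq_trans large; rewrite /n0 leq_addl.
  have := @ln_small R n h; lra.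
have hyp : ((d + 1) * (4 * d + 2 * (d * d) + 2 * t) <= n * d)%N.
  by apply: hyp_lem => //; rewrite /n0 in large.
have tot := total n1 d0 hyp.
have mk : #|Bad|%:R * p <= N%:R * ((d + 1)%:R ^+ t).
  apply: le_trans (_ : \sum_(E in regular_graphs n d) (#|short_cycles E t|)%:R <= _).
    rewrite mulr_natl -sumr_const big_mkcond [X in _ <= X]big_mkcond /=.
    apply: ler_sum => E _; rewrite finset.in_set; case: (E \in regular_graphs n d) => //=.
    by case: ifP.
  by rewrite -natr_sum -natrX -natrM ler_nat.
have p0 : 0 < p by rewrite /p powR_gt0.
have lnd1 : 2 * ln ((d + 1)%:R : R) <= 3 * L.
  have e2 : 2 * ln ((d + 1)%:R : R) = ln (((d + 1)%:R : R) ^+ 2).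
    by rewrite lnXn ?ltr0n ?addn1 // mulr_natl.
  have e3 : 3 * L = ln ((d%:R : R) ^+ 3).
    by rewrite lnXn ?ltr0n ?d0 // mulr_natl.
  rewrite e2 e3 ler_ln ?posrE ?exprn_gt0 ?ltr0n ?addn1 ?d0 //.
  by rewrite -!natrX ler_nat; have := @sq_cube d d3; rewrite addn1.
have lnd1' : 0 <= ln ((d + 1)%:R : R) by apply: ln_ge0; rewrite ler1n addn1.
have pw : ((d + 1)%:R : R) ^+ t <= n%:R `^ (3 * eps).
  have dp1 : (0:R) < (d + 1)%:R by rewrite ltr0n addn1.
  rewrite -powR_mulrn ?ler0n // -ler_ln ?posrE ?powR_gt0 ?dp1 ?n0R // !ln_powR.
  rewrite -qL.
  have h1 : t%:R * ln ((d + 1)%:R : R) <= 2 * eps * q * ln ((d + 1)%:R : R).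
    by apply: ler_wpM2r.
  apply: (le_trans h1).
  have eq0 : 0 <= eps * q by rewrite mulr_ge0 // ltW.
  have -> : 2 * eps * q * ln ((d + 1)%:R : R) = eps * q * (2 * ln ((d + 1)%:R : R)) by ring.
  have -> : 3 * eps * (q * L) = eps * q * (3 * L) by ring.
  have := ler_wpM2l eq0 lnd1; by [].
have e1 : 5 * eps - 1 = 3 * eps - (1 - 2 * eps) by ring.
rewrite e1 powRB; last by apply/implyP => _; exact: lt0r_neq0.
rewrite -/p ler_pdivrMr //.
have Y0 : 0 <= n%:R `^ (3 * eps) / p by apply: divr_ge0; [exact: powR_ge0 | exact: ltW].
have : #|Bad|%:R <= N%:R * (n%:R `^ (3 * eps) / p).
  rewrite mulrA ler_pdivlMr //; apply: (le_trans mk).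
  by apply: ler_wpM2l; [rewrite ler0n | exact: pw].
move: Y0; set Y := n%:R `^ (3 * eps) / p => Y0 bd.
apply: (le_trans bd).
have -> : n0%:R * Y * N%:R = n0%:R * (N%:R * Y) by ring.
by apply: ler_peMl => //; rewrite mulr_ge0 ?ler0n.
Qed.
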